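(* Let $p$ be a prime. Then: (1) every integer of the form $p_1^{2p^2-1}$ with $p_1$ prime is $p^2$-$T_0T^\ast$-perfect; (2) if $p$ is odd, every integer of the form $p_1^{(p-1)/2}\cdot p_2^{(p-1)/2}$ with distinct primes $p_1,p_2$ is $p^2$-$T_0T^\ast$-perfect; (3) every integer $n>1$ that is $p^2$-$T_0T^\ast$-perfect is of the form $p_1^{2p^2-1}$ with $p_1$ prime, or (with $p$ odd) of the form $p_1^{(p-1)/2}\cdot p_2^{(p-1)/2}$ with distinct primes $p_1,p_2$.
   Context: For a positive integer $m$, $T(m)$ denotes the product of all positive divisors of $m$, and $T^\ast(m)$ the product of all unitary divisors of $m$ (divisors $d$ with $\gcd(d,m/d)=1$). For an integer $K\ge 2$, an integer $n>1$ is called $K$-$T_0T^\ast$-perfect if $T(T^\ast(n))=n^K$. *)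

(* Defs.v *)
From mathcomp Require Import all_boot.
Set Implicit Arguments. Unset Strict Implicit. Unset Printing Implicit Defensive.

Definition T (m : nat) : nat := \prod_(d <- divisors m) d.

Definition Tstar (m : nat) : nat :=
  \prod_(d <- divisors m | coprime d (m %/ d)) d.

Definition T0Tstar_perfect (K n : nat) : Prop :=
  1 < n /\ T (Tstar n) = n ^ K.

(* Main.v *)
Require Import Defs.
From mathcomp Require Import all_boot zify.

Lemma divKn_ m d : 0 < m -> d %| m -> m %/ (m %/ d) = d.
Proof.
move=> m0 dm; have d0 : 0 < d by apply: dvdn_gt0 dm.
have q0 : 0 < m %/ d by rewrite divn_gt0 // dvdn_leq.
by rewrite -{1}(divnK dm) mulKn.
Qed.

Lemma perm_divisors_div m : 0 < m ->
  perm_eq (divisors m) [seq m %/ d | d <- divisors m].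
Proof.
move=> m0; apply: uniq_perm; first exact: divisors_uniq.
  rewrite map_inj_in_uniq ?divisors_uniq // => d e.
  rewrite -!dvdn_divisors // => dm em de.
  by rewrite -(@divKn_ m d m0 dm) de divKn_.
move=> e; apply/idP/idP.
  rewrite -dvdn_divisors // => em; apply/mapP; exists (m %/ e).
    by rewrite -dvdn_divisors // dvdn_div.
  by rewrite divKn_.
case/mapP=> d; rewrite -!dvdn_divisors // => dm ->; exact: dvdn_div.
Qed.

Lemma pair_prod (m : nat) (P : pred nat) : 0 < m ->
  (forall d, d %| m -> P (m %/ d) = P d) ->
  (\prod_(d <- divisors m | P d) d) ^ 2 = m ^ (\sum_(d <- divisors m | P d) 1).
Proof.
move=> m0 HP.
have E : \prod_(d <- divisors m | P d) d = \prod_(d <- divisors m | P d) (m %/ d).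
  rewrite {1}(perm_big _ (@perm_divisors_div m m0)) big_map.
  rewrite big_seq_cond [RHS]big_seq_cond; apply: eq_bigl => d.
  by case: (boolP (d \in divisors m)) => //= dm; rewrite HP // dvdn_divisors.
rewrite expnS expn1 {2}E -big_split /= big_seq_cond.
rewrite (eq_bigr (fun _ => m)); last first.
  by move=> d /andP[dm _]; rewrite mulnC divnK // dvdn_divisors.
rewrite -big_seq_cond big_const_seq iter_muln_1 sum1_count //.
Qed.
Lemma dvd_split a b e : 0 < a -> e %| a * b ->
  e = gcdn e a * (e %/ gcdn e a) /\ e %/ gcdn e a %| b.
Proof.
move=> a0 eab; set g := gcdn e a.
have g0 : 0 < g by rewrite gcdn_gt0 a0 orbT.
have ge : g %| e by apply: dvdn_gcdl.
have Ee : e = g * (e %/ g) by rewrite mulnC divnK.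
split=> //.
have : e %| g * b.
  by rewrite /g muln_gcdl dvdn_gcd dvdn_mulr.
by rewrite {1}Ee dvdn_pmul2l.
Qed.

Lemma perm_divisorsM a b : 0 < a -> 0 < b -> coprime a b ->
  perm_eq (divisors (a * b)) [seq d1 * d2 | d1 <- divisors a, d2 <- divisors b].
Proof.
move=> a0 b0 cab; have ab0 : 0 < a * b by rewrite muln_gt0 a0.
apply: uniq_perm; first exact: divisors_uniq.
  apply: allpairs_uniq; try exact: divisors_uniq.
  move=> [d1 d2] [e1 e2] /allpairsP[[x1 x2] /= [hx1 hx2 [-> ->]]].
  move=> /allpairsP[[y1 y2] /= [hy1 hy2 [-> ->]]] /= E.
  move: hx1 hx2 hy1 hy2; rewrite -!dvdn_divisors // => hx1 hx2 hy1 hy2.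
  have K u1 u2 : u1 %| a -> u2 %| b -> gcdn (u1 * u2) a = u1.
    move=> h1 h2; rewrite mulnC gcdnC Gauss_gcdr; first by rewrite gcdnC; apply/gcdn_idPl.
    exact: coprime_dvdr h2 cab.
  have E1 : x1 = y1 by rewrite -(K x1 x2) // E K.
  have x10 : 0 < x1 by apply: dvdn_gt0 hx1.
  by move: E; rewrite E1 => /eqP; rewrite -E1 eqn_pmul2l // => /eqP ->.
move=> e; apply/idP/idP.
  rewrite -dvdn_divisors // => eab.
  have [Ee eb] := @dvd_split a b e a0 eab.
  apply/allpairsP; exists (gcdn e a, e %/ gcdn e a) => /=.
  by rewrite -!dvdn_divisors // dvdn_gcdr.
case/allpairsP=> [[d1 d2] /= [h1 h2 ->]].
by move: h1 h2; rewrite -!dvdn_divisors // => h1 h2; apply: dvdn_mul.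
Qed.

Lemma big_divisorsM (R : Type) (idx : R) (op : Monoid.com_law idx) (F : nat -> R) a b :
  0 < a -> 0 < b -> coprime a b ->
  \big[op/idx]_(d <- divisors (a * b)) F d =
  \big[op/idx]_(d1 <- divisors a) \big[op/idx]_(d2 <- divisors b) F (d1 * d2).
Proof.
move=> a0 b0 cab; rewrite (perm_big _ (@perm_divisorsM a b a0 b0 cab)).
by rewrite big_allpairs_dep.
Qed.

Definition tau m := \sum_(d <- divisors m) 1.
Definition uc m := \sum_(d <- divisors m | coprime d (m %/ d)) 1.

Lemma T_sq m : 0 < m -> T m ^ 2 = m ^ tau m.
Proof.
move=> m0; rewrite /T /tau.
have := @pair_prod m predT m0 (fun _ _ => erefl).
by rewrite !big_mkcond.
Qed.

Lemma Tstar_sq m : 0 < m -> Tstar m ^ 2 = m ^ uc m.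
Proof.
move=> m0; apply: pair_prod => // d dm.
by rewrite /= divKn_ // coprime_sym.
Qed.

Lemma unitM a b d1 d2 : 0 < a -> 0 < b -> coprime a b -> d1 %| a -> d2 %| b ->
  coprime (d1 * d2) ((a * b) %/ (d1 * d2)) =
  coprime d1 (a %/ d1) && coprime d2 (b %/ d2).
Proof.
move=> a0 b0 cab h1 h2.
have d10 : 0 < d1 by apply: dvdn_gt0 h1.
have d20 : 0 < d2 by apply: dvdn_gt0 h2.
have c12 : coprime d1 (b %/ d2).
  exact: coprime_dvdr (dvdn_div h2) (coprime_dvdl h1 cab).
have c21 : coprime d2 (a %/ d1).
  rewrite coprime_sym; exact: coprime_dvdl (dvdn_div h1) (coprime_dvdr h2 cab).
have -> : (a * b) %/ (d1 * d2) = (a %/ d1) * (b %/ d2).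
  rewrite -{1}(divnK h1) -{1}(divnK h2) mulnACA mulnK //.
  by rewrite muln_gt0 d10.
rewrite coprimeMl !coprimeMr c12 c21 andbT /=.
by case: (coprime d1 _).
Qed.

Lemma sum_cond s (P : pred nat) : \sum_(d <- s | P d) 1 = \sum_(d <- s) (P d : nat).
Proof. by rewrite big_mkcond; apply: eq_bigr => d _; case: (P d). Qed.

Lemma tauM a b : 0 < a -> 0 < b -> coprime a b -> tau (a * b) = tau a * tau b.
Proof.
move=> a0 b0 cab; rewrite /tau big_divisorsM // big_distrl /=.
by apply: eq_bigr => d1 _; rewrite big_distrr /=; apply: eq_bigr.
Qed.

Lemma ucM a b : 0 < a -> 0 < b -> coprime a b -> uc (a * b) = uc a * uc b.
Proof.
move=> a0 b0 cab; rewrite /uc !sum_cond big_divisorsM // big_distrl /=.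
rewrite big_seq [RHS]big_seq; apply: eq_bigr => d1 h1.
rewrite big_distrr /= big_seq [RHS]big_seq; apply: eq_bigr => d2 h2.
move: h1 h2; rewrite -!dvdn_divisors // => h1 h2.
by rewrite unitM //; case: (coprime d1 _); case: (coprime d2 _).
Qed.

Lemma perm_divisorsX q k : prime q ->
  perm_eq (divisors (q ^ k)) [seq q ^ i | i <- iota 0 k.+1].
Proof.
move=> pq; have q1 := prime_gt1 pq.
have qk0 : 0 < q ^ k by rewrite expn_gt0 ltnW.
apply: uniq_perm; first exact: divisors_uniq.
  rewrite map_inj_uniq ?iota_uniq //; exact: expnI.
move=> e; rewrite -dvdn_divisors //; apply/idP/idP.
  case/dvdn_pfactor=> // i ik ->; apply/mapP; exists i => //.
  by rewrite mem_iota.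
case/mapP=> i; rewrite mem_iota /= => ik ->.
by apply/dvdn_pfactor => //; exists i.
Qed.

Lemma tauX q k : prime q -> tau (q ^ k) = k.+1.
Proof.
move=> pq; rewrite /tau (perm_big _ (@perm_divisorsX q k pq)) big_map.
by rewrite sum1_size size_iota.
Qed.

Lemma ucX q a : prime q -> 0 < a -> uc (q ^ a) = 2.
Proof.
move=> pq a0; have q1 := prime_gt1 pq; have q0 : 0 < q by apply: ltnW.
rewrite /uc sum_cond (perm_big _ (@perm_divisorsX q a pq)) big_map.
case: a a0 => // a _.
rewrite -[iota 0 a.+2]/(index_iota 0 a.+2).
rewrite big_nat_recl // big_nat_recr //= expn0 divn1 coprime1n /=.
rewrite divnn expn_gt0 q0 /= coprimen1 big1_seq //.
move=> i; rewrite mem_iota /= add0n => ia.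
rewrite subn0 in ia; rewrite -expnB //; last by rewrite ltnS ltnW.
rewrite coprime_pexpl // coprime_pexpr ?subSS ?subn_gt0 //.
by rewrite /coprime gcdnn eqn_leq leqNgt q1.
Qed.

Lemma sqinj x y : x ^ 2 = y ^ 2 -> x = y.
Proof. by move/eqP; rewrite eqn_exp2r // => /eqP. Qed.

Lemma div1 : divisors 1 = [:: 1]. Proof. by []. Qed.
Lemma uc1 : uc 1 = 1. Proof. by rewrite /uc div1 big_cons big_nil. Qed.
Lemma tau1 : tau 1 = 1. Proof. by rewrite /tau div1 big_cons big_nil. Qed.

Lemma tau_gt0 x : 0 < x -> 0 < tau x.
Proof.
move=> x0; have := divisor1 x; rewrite /tau sum1_size; by case: (divisors x).
Qed.

Lemma uc_gt0 x : 0 < x -> 0 < uc x.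
Proof.
move=> x0; rewrite /uc sum1_count -has_count; apply/hasP; exists 1.
  exact: divisor1.
by rewrite /= coprime1n.
Qed.

Lemma split_n n : 1 < n -> exists q a m,
  [/\ prime q, 0 < a, 0 < m, coprime q m & n = m * q ^ a].
Proof.
move=> n1; have pq := pdiv_prime n1; have n0 : 0 < n by apply: ltnW.
have [m cqm E] := pfactor_coprime pq n0.
exists (pdiv n), (logn (pdiv n) n), m; split=> //.
  by rewrite logn_gt0 mem_primes pq n0 pdiv_dvd.
by move: n0; rewrite E muln_gt0 => /andP[].
Qed.

Arguments split_n [n].

Lemma sq2 p x y : prime p -> p ^ 2 = x * y -> 1 < x -> 1 < y -> x = p /\ y = p.
Proof.
move=> pp E x1 y1; have p0 : 0 < p by apply: prime_gt0.
have : x %| p ^ 2 by rewrite E dvdn_mulr.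
case/dvdn_pfactor=> // i; case: i => [|[|[|i]]] // _ Ex; subst x.
- by rewrite expn0 in x1.
- split; first exact: expn1.
  by move: E; rewrite (expnS p 1) expn1 => /eqP; rewrite eqn_pmul2l // => /eqP ->.
- by move: E; rewrite -{1}(muln1 (p ^ 2)) => /eqP; rewrite eqn_pmul2l ?expn_gt0 ?p0 // => /eqP Ey; rewrite -Ey in y1.
Qed.

Arguments sq2 [p x y].

Lemma sq3 p x y z : prime p -> p ^ 2 = x * (y * z) -> 1 < x -> 1 < y -> 1 < z -> False.
Proof.
move=> pp E x1 y1 z1; have [_ Eyz] := sq2 pp E x1 (ltn_mul y1 z1 : 1 * 1 < _).
have : y %| p ^ 1 by rewrite expn1 -Eyz dvdn_mulr.
case/dvdn_pfactor=> // i; case: i => [|[|i]] // _ Ey; subst y.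
- by rewrite expn0 in y1.
- have p0 : 0 < p by apply: prime_gt0.
  move: Eyz; rewrite expn1 -{2}(muln1 p) => /eqP; rewrite eqn_pmul2l // => /eqP Ez.
  by rewrite Ez in z1.
Qed.

Arguments sq3 [p x y z].

Theorem mainTheorem9 (p : nat) (pp : prime p) :
  (forall p1 : nat, prime p1 ->
     T0Tstar_perfect (p ^ 2) (p1 ^ (2 * p ^ 2 - 1)))
  /\ (odd p -> forall p1 p2 : nat, prime p1 -> prime p2 -> p1 != p2 ->
        T0Tstar_perfect (p ^ 2) (p1 ^ ((p - 1) %/ 2) * p2 ^ ((p - 1) %/ 2)))
  /\ (forall n : nat, 1 < n -> T0Tstar_perfect (p ^ 2) n ->
        (exists p1 : nat, prime p1 /\ n = p1 ^ (2 * p ^ 2 - 1))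
        \/ (odd p /\ exists p1 p2 : nat, [/\ prime p1, prime p2, p1 != p2 &
              n = p1 ^ ((p - 1) %/ 2) * p2 ^ ((p - 1) %/ 2)])).
Proof.
have p1 := prime_gt1 pp; have p0 : 0 < p by apply: ltnW.
have pK : 0 < p ^ 2 by rewrite expn_gt0 p0.
split; [|split].
- move=> q pq; have q1 := prime_gt1 pq; have q0 : 0 < q by apply: ltnW.
  set a := 2 * p ^ 2 - 1.
  have a0 : 0 < a by rewrite /a; lia.
  have qa0 : 0 < q ^ a by rewrite expn_gt0 q0.
  split; first by rewrite -(exp1n a) ltn_exp2r.
  have -> : Tstar (q ^ a) = q ^ a.
    by apply: sqinj; rewrite Tstar_sq // ucX.
  apply: sqinj; rewrite T_sq // tauX // -!expnM; congr (_ ^ _); rewrite /a; lia.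
- move=> op q r pq pr qr.
  have pn2 : p != 2 by apply/eqP => E; rewrite E in op.
  have p2 : 2 < p by lia.
  have pm : p %% 2 = 1 by rewrite modn2 op.
  set k := (p - 1) %/ 2.
  have k0 : 0 < k by rewrite /k; lia.
  have Ek : (2 * k).+1 = p by rewrite /k; lia.
  have q1 := prime_gt1 pq; have r1 := prime_gt1 pr.
  have qk0 : 0 < q ^ k by rewrite expn_gt0 ltnW.
  have rk0 : 0 < r ^ k by rewrite expn_gt0 ltnW.
  have cqr : coprime q r by rewrite prime_coprime // dvdn_prime2.
  have cqrk j : coprime (q ^ j) (r ^ j) by rewrite coprimeXl // coprimeXr.
  set n := q ^ k * r ^ k.
  have n1 : 1 < n.
    by rewrite /n -(muln1 1) ltn_mul // -(exp1n k) ltn_exp2r.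
  have n0 : 0 < n by apply: ltnW.
  split=> //.
  have -> : Tstar n = n ^ 2.
    by apply: sqinj; rewrite Tstar_sq // ucM // !ucX // -expnM.
  apply: sqinj; rewrite T_sq ?expn_gt0 ?n0 // -!expnM.
  have Etn : tau (n ^ 2) = p ^ 2.
    rewrite /n expnMn -!expnM tauM ?expn_gt0 ?prime_gt0 // !tauX //.
    by rewrite [k * 2]mulnC Ek mulnn.
  by rewrite Etn mulnC.
- move=> n n1 [_ HT].
  have [q [a [m [pq a0 m0 cqm En]]]] := split_n n1.
  have q1 := prime_gt1 pq; have n0 : 0 < n by apply: ltnW.
  have qa0 : 0 < q ^ a by rewrite expn_gt0 ltnW.
  have cqa : coprime (q ^ a) m by rewrite coprime_pexpl.
  set u := uc m.
  have u0 : 0 < u by apply: uc_gt0.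
  have Eu : uc n = 2 * u by rewrite En mulnC ucM // ucX.
  have EN : Tstar n = n ^ u.
    by apply: sqinj; rewrite Tstar_sq // Eu -expnM mulnC.
  have Etau : tau (Tstar n) = (a * u).+1 * tau (m ^ u).
    rewrite EN En expnMn -expnM mulnC tauM ?expn_gt0 ?m0 ?prime_gt0 //.
      by rewrite tauX.
    by rewrite coprimeXl // coprimeXr.
  have Hk : p ^ 2 * 2 = u * tau (Tstar n).
    apply: (expnI n1); rewrite expnM -HT T_sq; last by rewrite EN expn_gt0 n0.
    by rewrite EN -expnM.
  rewrite Etau in Hk.
  case: (leqP m 1) => hm.
    have m1 : m = 1 by lia.
    subst m; left; exists q; split=> //.
    move: Hk; rewrite /u uc1 exp1n tau1 !muln1 mul1n => Hk.
    by rewrite En mul1n; congr (_ ^ _); lia.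
  have [r [b [m' [pr b0 m'0 crm Em]]]] := split_n hm.
  have rb0 : 0 < r ^ b by rewrite expn_gt0 prime_gt0.
  have crb : coprime (r ^ b) m' by rewrite coprime_pexpl.
  set u' := uc m'.
  have u'0 : 0 < u' by apply: uc_gt0.
  have Eu' : u = 2 * u' by rewrite /u Em mulnC ucM // ucX.
  have Etau' : tau (m ^ u) = (b * u).+1 * tau (m' ^ u).
    rewrite Em expnMn -expnM mulnC tauM ?expn_gt0 ?m'0 ?prime_gt0 //.
      by rewrite tauX.
    by rewrite coprimeXl // coprimeXr.
  rewrite Etau' in Hk.
  set t := tau (m' ^ u) in Hk.
  have t0 : 0 < t by apply: tau_gt0; rewrite expn_gt0 m'0.
  set X := (a * u).+1 * ((b * u).+1 * t) in Hk.
  have HX : p ^ 2 = u' * X.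
    apply/eqP; rewrite -(eqn_pmul2r (isT : 0 < 2)) Hk Eu' -mulnA mulnC.
    done.
  case: (leqP m' 1) => hm'.
    have m'1 : m' = 1 by lia.
    move: HX; rewrite /X /t /u' m'1 exp1n tau1 uc1 in Eu' *.
    rewrite Eu' !muln1 mul1n => HX.
    have h1 : 1 < (a * 2).+1 by rewrite ltnS muln_gt0 a0.
    have h2 : 1 < (b * 2).+1 by rewrite ltnS muln_gt0 b0.
    have [Ha Hb] := sq2 pp HX h1 h2.
    right; split; first by rewrite -Ha /= oddM andbF.
    exists q, r; split=> //.
      apply/eqP => E; subst r; move: cqm; rewrite Em coprimeMr coprime_pexpr //.
      by rewrite /coprime gcdnn; case/andP => _ /eqP E; rewrite E in q1.
    by rewrite En Em m'1 mul1n mulnC; congr (_ ^ _ * _ ^ _); lia.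
  have [s [c [m'' [ps c0 m''0 csm Em']]]] := split_n hm'.
  have sc0 : 0 < s ^ c by rewrite expn_gt0 prime_gt0.
  have u''0 : 0 < uc m'' by apply: uc_gt0.
  have Eu'' : u' = 2 * uc m''.
    by rewrite /u' Em' mulnC ucM // ?ucX // coprime_pexpl.
  exfalso; apply: (sq3 pp HX).
  - by rewrite Eu''; lia.
  - by rewrite ltnS muln_gt0 a0.
  - have hb : 1 < (b * u).+1 by rewrite ltnS muln_gt0 b0.
    by apply: (leq_trans hb); rewrite leq_pmulr.
Qed.
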